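(* Let $n\geq 2$ and let $\mathcal{G}=(\mathcal{V},\mathcal{E})$ be a directed graph on $\mathcal{V}=\{1,\ldots,n\}$ in which every node has at least one outgoing edge, with hyperlink matrix $A$, let $m\in(0,1)$, let $x^*$ be the PageRank vector, and let $Q=(1-m)A$. Let $\mathcal{V}_1,\ldots,\mathcal{V}_N$ ($1\leq N\leq n$) be a partition of $\mathcal{V}$ into nonempty groups of consecutive indices, $\mathcal{V}_1=\{1,\ldots,l_1\}$, $\mathcal{V}_2=\{l_1+1,\ldots,l_1+l_2\}$, $\ldots$, $\mathcal{V}_N=\{n-l_N+1,\ldots,n\}$, and partition $Q$ into blocks $\check{Q}_{hg}\in\mathbb{R}^{l_h\times l_g}$ accordingly; likewise write $x(k)=(\check{x}_1(k)^T,\ldots,\check{x}_N(k)^T)^T$ and $z(k)=(\check{z}_1(k)^T,\ldots,\check{z}_N(k)^T)^T$ with $\check{x}_h(k),\check{z}_h(k)\in\mathbb{R}^{l_h}$. Let $\{\psi(k)\}_{k\geq 0}$ be any sequence in $\{1,\ldots,N\}$. Consider the algorithm with $\check{x}_h(0)=\check{z}_h(0)=\frac{m}{n}\mathbf{1}_{l_h}$ for all $h$, and for $k\geq 0$ and each $h$, $$\check{x}_h(k+1)=\check{x}_h(k)+\check{Q}_{h\psi(k)}\big(I-\check{Q}_{\psi(k)\psi(k)}\big)^{-1}\check{z}_{\psi(k)}(k),$$ $$\check{z}_h(k+1)=\begin{cases}0&\text{if } h=\psi(k),\\ \check{z}_h(k)+\check{Q}_{h\psi(k)}\big(I-\check{Q}_{\psi(k)\psi(k)}\big)^{-1}\check{z}_{\psi(k)}(k)&\text{otherwise.}\end{cases}$$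 Then $x(k)\leq x(k+1)\leq x^*$ for all $k\geq 0$.
   Context: Write $(i,j)\in\mathcal{E}$ if page $i$ has a link to page $j$. $\mathcal{L}_j^{\text{out}}=\{i:(j,i)\in\mathcal{E}\}$ and $n_j=|\mathcal{L}_j^{\text{out}}|\geq 1$. The hyperlink matrix $A=(a_{ij})$ is defined by $a_{ij}=1/n_j$ if $i\in\mathcal{L}_j^{\text{out}}$ and $a_{ij}=0$ otherwise (column stochastic). The PageRank vector $x^*$ satisfies $x^*=(1-m)Ax^*+\frac{m}{n}\mathbf{1}_n$ and $\mathbf{1}_n^Tx^*=1$. Each diagonal block $\check{Q}_{hh}$ is a nonnegative principal submatrix of the Schur stable matrix $Q$, so $I-\check{Q}_{hh}$ is invertible. Inequalities between vectors are entrywise. *)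

(* Defs.v *)
From mathcomp Require Import all_boot all_order all_algebra.
Set Implicit Arguments. Unset Strict Implicit. Unset Printing Implicit Defensive.
Import Order.TTheory GRing.Theory Num.Theory.
Local Open Scope ring_scope.

Definition nout (n : nat) (E : rel 'I_n) (j : 'I_n) : nat := #|[set i | E j i]|.

Definition hyperlink (R : fieldType) (n : nat) (E : rel 'I_n) : 'M[R]_n :=
  \matrix_(i, j) (if E j i then (nout E j)%:R^-1 else 0).

(* Entry (a,b) of a matrix, indexed by natural numbers (0-based);
   0 outside the range. *)
Definition getM (R : nmodType) (p q : nat) (M : 'M[R]_(p, q)) (a b : nat) : R :=
  match insub a, insub b with
  | Some a', Some b' => M a' b'
  | _, _ => 0
  end.

(* Offset of group h: l_0 + ... + l_{h-1} (0-based group indices). *)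
Definition offs (N : nat) (l : 'I_N -> nat) (h : 'I_N) : nat :=
  (\sum_(g < N | (g < h)%N) l g)%N.

Definition blkM (R : nmodType) (n N : nat) (l : 'I_N -> nat) (M : 'M[R]_n)
  (h g : 'I_N) : 'M[R]_(l h, l g) :=
  \matrix_(i, j) getM M (offs l h + i) (offs l g + j).

Definition blkV (R : nmodType) (n N : nat) (l : 'I_N -> nat) (x : 'cV[R]_n)
  (h : 'I_N) : 'cV[R]_(l h) :=
  \matrix_(i, j) getM x (offs l h + i) 0.

(* Main.v *)
Require Import Defs.
From mathcomp Require Import all_boot all_order all_algebra.
Set Implicit Arguments. Unset Strict Implicit. Unset Printing Implicit Defensive.
Import Order.TTheory GRing.Theory Num.Theory.
Local Open Scope ring_scope.
From mathcomp Require Import ring lra zify.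
Section Aux.
Variable R : realFieldType.

Lemma Mlemma p (B : 'M[R]_p) (v : 'cV[R]_p) (c : R) : c < 1 ->
  (forall i j, 0 <= B i j) -> (forall j, \sum_i B i j <= c) ->
  (forall i, 0 <= ((1%:M - B) *m v) i 0) -> forall i, 0 <= v i 0.
Proof.
move=> c1 B0 Bc w0.
pose mn i := Order.min (v i 0) 0.
have mnv i : mn i <= v i 0 by rewrite /mn ge_min lexx.
have mn0 i : mn i <= 0 by rewrite /mn ge_min lexx orbT.
have key i : \sum_j B i j * mn j <= mn i.
  have wi := w0 i; rewrite mulmxBl mul1mx !mxE in wi.
  have h1 : \sum_j B i j * mn j <= \sum_j B i j * v j 0.
    by apply: ler_sum => j _; apply: ler_wpM2l.
  have h2 : \sum_j B i j * mn j <= 0.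
    by apply: sumr_le0 => j _; apply: mulr_ge0_le0.
  rewrite /mn le_min h2 andbT.
  move: wi h1; rewrite ?mxE; lra.
pose s := \sum_i mn i.
have h3 : \sum_i \sum_j B i j * mn j <= s by apply: ler_sum => i _; apply: key.
have h4 : c * s <= \sum_i \sum_j B i j * mn j.
  rewrite exchange_big /s mulr_sumr; apply: ler_sum => j _.
  rewrite -mulr_suml.
  have := Bc j; have := mn0 j; nra.
have s0 : 0 <= s by nra.
move=> i.
have : 0 <= mn i.
  move: s0; rewrite /s (bigD1 i) //=.
  have : \sum_(j | j != i) mn j <= 0 by apply: sumr_le0 => j _; apply: mn0.
  lra.
by rewrite /mn le_min lexx andbT.
Qed.

Lemma Munit p (B : 'M[R]_p) (c : R) : c < 1 ->
  (forall i j, 0 <= B i j) -> (forall j, \sum_i B i j <= c) ->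
  (1%:M - B) \in unitmx.
Proof.
move=> c1 B0 Bc.
rewrite -unitmx_tr -row_free_unit; apply/inj_row_free => v Hv.
have H : (1%:M - B) *m v^T = 0 by rewrite -(trmxK (1%:M - B)) -trmx_mul Hv trmx0.
apply/rowP => j; rewrite mxE; apply/eqP; rewrite eq_le.
have h1 := @Mlemma p B v^T c c1 B0 Bc.
have h2 := @Mlemma p B (- v^T) c c1 B0 Bc.
rewrite H in h1; rewrite mulmxN H oppr0 in h2.
have := h1 (fun i => ltac:(by rewrite mxE)) j; have := h2 (fun i => ltac:(by rewrite mxE)) j.
rewrite !mxE; lra.
Qed.
End Aux.
Section Idx.
Variables (N : nat) (l : 'I_N -> nat).
Local Open Scope nat_scope.

Definition lN g : nat := if insub g is Some g' then l g' else 0.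
Definition O t : nat := \sum_(0 <= g < t) lN g.

Lemma lN_ord (g : 'I_N) : lN g = l g.
Proof. by rewrite /lN valK. Qed.

Lemma offsE (h : 'I_N) : offs l h = O h.
Proof.
rewrite /offs /O big_mkord (big_ord_widen N lN (ltnW (ltn_ord h))).
by apply: eq_bigr => g _; rewrite lN_ord.
Qed.

Lemma OS t : O t.+1 = O t + lN t.
Proof. by rewrite /O big_nat_recr. Qed.

Lemma O_mono t u : t <= u -> O t <= O u.
Proof. by move=> tu; rewrite /O [X in _ <= X](@big_cat_nat _ _ _ t) //= leq_addr. Qed.

Lemma ON : O N = \sum_(g < N) l g.
Proof. by rewrite /O big_mkord; apply: eq_bigr => g _; rewrite lN_ord. Qed.

Lemma offs_bound (h : 'I_N) : offs l h + l h <= \sum_(g<N) l g.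
Proof. by rewrite offsE -lN_ord -OS -ON; apply: O_mono. Qed.

Lemma offs_mono (h g : 'I_N) : h < g -> offs l h + l h <= offs l g.
Proof. by move=> hg; rewrite !offsE -lN_ord -OS; apply: O_mono. Qed.

Lemma locate (a : nat) : a < \sum_(g<N) l g ->
  exists h : 'I_N, exists i : 'I_(l h), a = offs l h + i.
Proof.
rewrite -ON.
have : forall t, t <= N -> a < O t -> exists h : 'I_N, exists i : 'I_(l h), a = offs l h + i.
  elim=> [|t IH] tN; first by rewrite /O big_geq.
  case: (ltnP a (O t)) => [lt _|ge]; first by apply: IH => //; apply: ltnW.
  rewrite OS => lt.
  have tN' : t < N by [].
  exists (Ordinal tN').
  have li : a - O t < l (Ordinal tN').
    by rewrite -lN_ord /=; lia.
  exists (Ordinal li); rewrite offsE /=; lia.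
by apply.
Qed.

Lemma disj (h p : 'I_N) (i : nat) : i < l h -> h != p ->
  offs l p <= offs l h + i -> l p <= offs l h + i - offs l p.
Proof.
move=> il hp le.
case: (ltngtP h p) => [hlt|plt|heq].
- have := offs_mono hlt; lia.
- have := offs_mono plt; lia.
- by move: hp; rewrite (val_inj heq) eqxx.
Qed.
End Idx.
Section Aux3.
Variable R : realFieldType.

Lemma getM_ord p q (M : 'M[R]_(p, q)) (i : 'I_p) (j : 'I_q) : getM M i j = M i j.
Proof. by rewrite /getM !valK. Qed.

Lemma getMv p (v : 'cV[R]_p) (a : 'I_p) : getM v a 0%N = v a 0.
Proof. by rewrite -(getM_ord v a 0). Qed.

Lemma getM_ge0 p q (M : 'M[R]_(p, q)) a b : (forall i j, 0 <= M i j) -> 0 <= getM M a b.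
Proof. by move=> H; rewrite /getM; case: insub => [a'|//]; case: insub. Qed.

Lemma getM_outr p q (M : 'M[R]_(p, q)) a b : (q <= b)%N -> getM M a b = 0.
Proof.
by move=> H; rewrite /getM; case: insub => [a'|//]; rewrite insubF // ltnNge H.
Qed.

Lemma getM_outl p q (M : 'M[R]_(p, q)) a b : (p <= a)%N -> getM M a b = 0.
Proof. by move=> H; rewrite /getM insubF // ltnNge H. Qed.

Lemma sum_shift (G : nat -> R) s t :
  \sum_(i < t) G (s + i)%N = \sum_(s <= a < s + t) G a.
Proof.
rewrite -{2}(add0n s) big_addn addKn big_mkord.
by apply: eq_bigr => i _; rewrite addnC.
Qed.

Lemma sum_sub (G : nat -> R) s t n : (forall a, 0 <= G a) -> (s + t <= n)%N ->
  \sum_(i < t) G (s + i)%N <= \sum_(a < n) G a.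
Proof.
move=> G0 le; rewrite sum_shift -(big_mkord xpredT G).
rewrite (@big_cat_nat _ _ _ s 0 n) //=; last by apply: leq_trans le; apply: leq_addr.
rewrite (@big_cat_nat _ _ _ (s + t) s n) //=; last by apply: leq_addr.
have h1 : 0 <= \sum_(0 <= i < s) G i by apply: sumr_ge0.
have h2 : 0 <= \sum_(s + t <= i < n) G i by apply: sumr_ge0.
lra.
Qed.

Lemma sum_block (G : nat -> R) s t n : (s + t <= n)%N ->
  (forall a, (a < s)%N -> G a = 0) -> (forall a, (s + t <= a)%N -> G a = 0) ->
  \sum_(a < n) G a = \sum_(i < t) G (s + i)%N.
Proof.
move=> le H1 H2; rewrite sum_shift -(big_mkord xpredT G).
rewrite (@big_cat_nat _ _ _ s 0 n) //=; last by apply: leq_trans le; apply: leq_addr.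
rewrite (@big_cat_nat _ _ _ (s + t) s n) //=; last by apply: leq_addr.
have z1 : \sum_(0 <= a < s) G a = 0.
  by rewrite big_nat_cond big1 // => a /andP[/andP[_ H] _]; apply: H1.
have z2 : \sum_(s + t <= a < n) G a = 0.
  by rewrite big_nat_cond big1 // => a /andP[/andP[H _] _]; apply: H2.
by rewrite z1 z2 add0r addr0.
Qed.
End Aux3.
Theorem lemma4 (R : realFieldType) (n : nat) (E : rel 'I_n) (m : R)
  (xstar : 'cV[R]_n) (N : nat) (l : 'I_N -> nat) (psi : nat -> 'I_N)
  (x z : nat -> 'cV[R]_n) :
  (2 <= n)%N ->
  (forall j : 'I_n, exists i : 'I_n, E j i) ->
  0 < m < 1 ->
  xstar = (1 - m) *: hyperlink R E *m xstar + const_mx (m / n%:R) ->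
  \sum_(i < n) xstar i 0 = 1 ->
  (1 <= N <= n)%N ->
  (forall h, 0 < l h)%N ->
  (\sum_(h < N) l h)%N = n ->
  let Q := (1 - m) *: hyperlink R E in
  (forall h, blkV l (x 0%N) h = const_mx (m / n%:R)) ->
  (forall h, blkV l (z 0%N) h = const_mx (m / n%:R)) ->
  (forall k h, blkV l (x k.+1) h =
     blkV l (x k) h + blkM l Q h (psi k)
       *m invmx (1%:M - blkM l Q (psi k) (psi k)) *m blkV l (z k) (psi k)) ->
  (forall k h, blkV l (z k.+1) h =
     if h == psi k then 0
     else blkV l (z k) h + blkM l Q h (psi k)
       *m invmx (1%:M - blkM l Q (psi k) (psi k)) *m blkV l (z k) (psi k)) ->
  forall (k : nat) (i : 'I_n),
    x k i 0 <= x k.+1 i 0 /\ x k.+1 i 0 <= xstar i 0.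
Proof.
move=> n2 Eout /andP[m0 m1] Hxs _ _ _ Hsum Q Hx0 Hz0 Hx Hz.
change ((1 - m) *: hyperlink R E) with Q in Hxs.
have nR : 0 < n%:R :> R by rewrite ltr0n; case: n n2 {E Eout xstar x z Hxs Hx0 Hz0 Hx Hz Q Hsum} => // *.
have bpos : 0 <= m / n%:R by apply: divr_ge0; lra.
have Q0 a c : 0 <= Q a c.
  rewrite !mxE; apply: mulr_ge0; first lra.
  by case: (E c a) => //; rewrite invr_ge0 ler0n.
have Qcol (c : 'I_n) : \sum_a Q a c <= 1 - m.
  have -> : \sum_a Q a c = (1 - m) * \sum_(a in [set a | E c a]) (nout E c)%:R^-1.
    rewrite mulr_sumr [RHS]big_mkcond; apply: eq_bigr => a _.
    by rewrite !mxE in_set; case: (E c a); rewrite ?mulr0.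
  rewrite sumr_const; change #|[set a | E c a]| with (nout E c).
  rewrite -(mulr_natr ((nout E c)%:R^-1)) mulVf ?mulr1 //.
  rewrite pnatr_eq0 -lt0n; apply/card_gt0P.
  by case: (Eout c) => a Ha; exists a; rewrite in_set.
have gQ0 a c : 0 <= getM Q a c by apply: getM_ge0.
have Qcoln (c : nat) : \sum_(a < n) getM Q a c <= 1 - m.
  case: (ltnP c n) => cn.
    have := Qcol (Ordinal cn); congr (_ <= _); apply: eq_bigr => a _.
    by rewrite -(getM_ord Q a (Ordinal cn)).
  by rewrite big1 ?subr_ge0 ?ltW // => a _; rewrite getM_outr.
have obound p : (offs l p + l p <= n)%N by rewrite -Hsum offs_bound.
have Bnn p q i j : 0 <= blkM l Q p q i j by rewrite mxE.
have Bcol p (j : 'I_(l p)) : \sum_i blkM l Q p p i j <= 1 - m.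
  apply: le_trans (Qcoln (offs l p + j)%N).
  have -> : \sum_i blkM l Q p p i j = \sum_(i < l p) getM Q (offs l p + i)%N (offs l p + j)%N.
    by apply: eq_bigr => i _; rewrite mxE.
  exact: (@sum_sub _ (fun a => getM Q a (offs l p + j)%N) (offs l p) (l p) n).
have c1 : 1 - m < 1 by lra.
have Bunit p : (1%:M - blkM l Q p p) \in unitmx by apply: (Munit c1).
have vE (v : 'cV[R]_n) h (i : 'I_(l h)) (a : 'I_n) :
    val a = (offs l h + i)%N -> blkV l v h i 0 = v a 0.
  by move=> Ha; rewrite mxE -Ha getMv.
pose u k := invmx (1%:M - blkM l Q (psi k) (psi k)) *m blkV l (z k) (psi k).
pose U k : 'cV[R]_n := \col_(b < n) (if (offs l (psi k) <= b)%N
   then getM (u k) (b - offs l (psi k))%N 0%N else 0).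
have QU k (a : 'I_n) : (Q *m U k) a 0 =
    \sum_(j < l (psi k)) getM Q a (offs l (psi k) + j)%N * u k j 0.
  rewrite mxE.
  pose G := fun b : nat => getM Q a b *
     (if (offs l (psi k) <= b)%N then getM (u k) (b - offs l (psi k))%N 0%N else 0).
  transitivity (\sum_(b < n) G b).
    by apply: eq_bigr => b _; rewrite /G /= getM_ord !mxE.
  rewrite (@sum_block _ G _ _ _ (obound (psi k))).
  - by apply: eq_bigr => j _; rewrite /G leq_addr addKn getMv.
  - by move=> b hb; rewrite /G leqNgt hb /= mulr0.
  - move=> b hb; rewrite /G [getM (u k) _ _]getM_outl ?mulr0; last by lia.
    by case: ifP => _; rewrite mulr0.
have BU k h (i : 'I_(l h)) : (blkM l Q h (psi k) *m u k) i 0 =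
    \sum_(j < l (psi k)) getM Q (offs l h + i)%N (offs l (psi k) + j)%N * u k j 0.
  by rewrite mxE; apply: eq_bigr => j _; rewrite mxE.
have uK k : (1%:M - blkM l Q (psi k) (psi k)) *m u k = blkV l (z k) (psi k).
  by rewrite /u mulmxA (mulmxV (Bunit _)) mul1mx.
have Hx' k h : blkV l (x k.+1) h = blkV l (x k) h + blkM l Q h (psi k) *m u k.
  by rewrite Hx -mulmxA.
have Hz' k h : blkV l (z k.+1) h = if h == psi k then 0 else
    blkV l (z k) h + blkM l Q h (psi k) *m u k.
  by rewrite Hz -mulmxA.
have addE (A B : 'cV[R]_n) a : (A + B) a 0 = A a 0 + B a 0 by rewrite mxE.
have oppE (A : 'cV[R]_n) a : (- A) a 0 = - A a 0 by rewrite mxE.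
have addE' p (A B : 'cV[R]_p) a : (A + B) a 0 = A a 0 + B a 0 by rewrite mxE.
have subE' p (A B : 'cV[R]_p) a : (A - B) a 0 = A a 0 - B a 0 by rewrite !mxE.
have xstep k : x k.+1 = x k + Q *m U k.
  apply/matrixP => a c; have -> : c = 0 by rewrite (ord1 c).
  have la : (val a < \sum_(g < N) l g)%N by rewrite Hsum ltn_ord.
  have [h [i Ha]] := @locate N l a la.
  rewrite -(vE (x k.+1) h i a Ha) Hx' addE' (vE (x k) h i a Ha) BU addE QU -Ha.
  by [].
have zstep k : z k.+1 = z k + Q *m U k - U k.
  apply/matrixP => a c; have -> : c = 0 by rewrite (ord1 c).
  have la : (val a < \sum_(g < N) l g)%N by rewrite Hsum ltn_ord.
  have [h [i Ha]] := @locate N l a la.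
  rewrite -(vE (z k.+1) h i a Ha) Hz' !addE oppE QU.
  case: eqP => [hp|hp].
    subst h.
    have := congr1 (fun M : 'cV[R]_(l (psi k)) => M i 0) (uK k).
    rewrite /= mulmxBl mul1mx subE' BU (vE (z k) _ i a Ha) -Ha.
    have z0 : (0 : 'cV[R]_(l (psi k))) i 0 = 0 by rewrite mxE.
    rewrite [U k a 0]mxE Ha leq_addr addKn getMv z0 -Ha.
    lra.
  rewrite addE' (vE (z k) h i a Ha) BU -Ha mxE.
  rewrite (_ : (if _ then _ else _) = 0) ?subr0 //.
  case: ifP => // le; apply: getM_outl.
  rewrite Ha; apply: disj => //; last by rewrite -Ha.
  by apply/eqP.
have upos k : (forall a, 0 <= z k a 0) -> forall j, 0 <= u k j 0.
  move=> zpos; apply: (Mlemma c1 (Bnn _ _) (Bcol _)) => i.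
  rewrite uK mxE; apply: getM_ge0 => a c.
  by rewrite (ord1 c); apply: zpos.
have loc (a : 'I_n) : exists h : 'I_N, exists i : 'I_(l h), val a = (offs l h + i)%N.
  have la : (val a < \sum_(g < N) l g)%N by rewrite Hsum ltn_ord.
  exact: (@locate N l a la).
have Inv k : (forall a, 0 <= z k a 0) /\ (1%:M - Q) *m (xstar - x k) = Q *m z k.
  elim: k => [|k [zpos IH]].
    have x0E : x 0%N = const_mx (m / n%:R).
      apply/matrixP => a c; have -> : c = 0 by rewrite (ord1 c).
      have [h [i Ha]] := loc a.
      by rewrite -(vE (x 0%N) h i a Ha) Hx0 !mxE.
    have z0E : z 0%N = const_mx (m / n%:R).
      apply/matrixP => a c; have -> : c = 0 by rewrite (ord1 c).
      have [h [i Ha]] := loc a.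
      by rewrite -(vE (z 0%N) h i a Ha) Hz0 !mxE.
    split; first by move=> a; rewrite z0E mxE.
    rewrite x0E z0E; set b := const_mx _.
    have Hb : xstar - Q *m xstar = b by rewrite {1}Hxs addrAC subrr add0r.
    rewrite mulmxBr !mulmxBl !mul1mx Hb.
    by rewrite opprB addrC subrK.
  split.
    move=> a; have [h [i Ha]] := loc a.
    rewrite -(vE (z k.+1) h i a Ha) Hz'; case: eqP => _; first by rewrite mxE.
    rewrite addE' (vE (z k) h i a Ha) BU; apply: addr_ge0 => //.
    apply: sumr_ge0 => j _; apply: mulr_ge0 => //; exact: upos.
  rewrite xstep zstep opprD addrA mulmxDr IH mulmxN !mulmxBl !mul1mx !mulmxDr mulmxN !mulmxA.
  by rewrite opprB addrA.
move=> k i; have [zp0 _] := Inv k; have [zp1 I1] := Inv k.+1.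
split.
  rewrite xstep addE QU lerDl.
  apply: sumr_ge0 => j _; apply: mulr_ge0 => //; exact: upos.
have := @Mlemma _ _ Q (xstar - x k.+1) _ c1 Q0 Qcol.
have H : forall i, 0 <= ((1%:M - Q) *m (xstar - x k.+1)) i 0.
  move=> i'; rewrite I1 mxE; apply: sumr_ge0 => j _; apply: mulr_ge0 => //.
move=> /(_ H i); rewrite subE'; lra.
Qed.
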